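(* Let $F>1$ and $s>0$ be constants. Consider the self-adjusting $(1,\lambda)$ EA (defined in the context) with update strength $F$ and success rate $s$, using either standard bit mutation with mutation probability $p\in O(1/n)\cap n^{-O(1)}$ or the heavy-tailed mutation operator with a constant $\beta>1$, on an everywhere hard function $f$ with $d+1=n^{o(\log n)}$ function values. Let $\gamma>1$ be a constant with $p_x^-\le\gamma^{-1}$ for all non-optimal $x$, let $\lambda_1:=4\max\left(\log_\gamma(2d(s+1)),\log_\gamma(n\log n)\right)$, and define the potential \[ g(X_t)=f(x_t)-\frac{s}{s+1}\log_F\left(\max\left(\frac{F^{1/s}}{p_{\min}\lambda_t},1\right)\right). \] Then for $n$ large enough, for every generation $t$ with $f(x_t)<d$ and $\lambda_t\ge\lambda_1$, \[ E[g(X_{t+1})-g(X_t)\mid X_t]\ge\frac{1}{2(s+1)}. \] This also holds when every fitness improvement is counted as an increase of the fitness by exactly $1$.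
   Context: Search space $\{0,1\}^n$; asymptotics with respect to $n\to\infty$. W.l.o.g. $f$ takes values in $\{0,\dots,d\}$ with global optima at value $d$. Self-adjusting $(1,\lambda)$ EA: state $X_t=(x_t,\lambda_t)$ with current search point $x_t$ and real-valued offspring population size $\lambda_t$ (rounded to a nearest integer when needed). Each generation creates $\lambda_t$ offspring independently by mutating $x_t$, picks an offspring $y$ of maximum fitness (ties uniformly at random), sets $x_{t+1}=y$ in any case, and sets $\lambda_{t+1}=\max\{1,\lambda_t/F\}$ if $f(y)>f(x_t)$ and $\lambda_{t+1}=F^{1/s}\lambda_t$ otherwise. Standard bit mutation with probability $p$ flips each bit independently with probability $p$. Heavy-tailed mutation with $\beta>1$ draws $\chi\in\{1,\dots,n/2\}$ with $\Pr[\chi=i]=i^{-\beta}/\sum_{j=1}^{n/2}j^{-\beta}$ and then does standard bit mutation with probability $\chi/n$. For these operators such a constant $\gamma$ exists. $p_x^+$ (resp. $p_x^-$) is the probability that a single offspring of $x$ has strictly larger (resp. smaller) fitness than $x$; $p_{\min}:=\min\{p_x^+ : f(x)<d\}$, $p_{\max}:=\max\{p_x^+ : f(x)<d\}$. $f$ is everywhere hard if $p_{\max}=O(n^{-\varepsilon})$ for some constant $0<\varepsilon<1$. *)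

(* Defs.v *)
From HB Require Import structures.
From mathcomp Require Import all_boot all_order all_algebra.
From mathcomp Require Import reals exp.
Set Implicit Arguments. Unset Strict Implicit. Unset Printing Implicit Defensive.
Import Order.TTheory GRing.Theory Num.Theory.
Local Open Scope ring_scope.

Section SelfAdjustingEA.
Variable R : realType.

Definition bits (n : nat) := {ffun 'I_n -> bool}.

Definition hdist n (x y : bits n) : nat := #|[set i | x i != y i]|.

Definition sbm n (p : R) (x y : bits n) : R :=
  p ^+ hdist x y * (1 - p) ^+ (n - hdist x y).

Definition ht_norm n (beta : R) : R := \sum_(1 <= j < n./2.+1) (j%:R `^ (- beta)).
Definition heavy n (beta : R) (x y : bits n) : R :=
  \sum_(1 <= i < n./2.+1) (i%:R `^ (- beta) / ht_norm n beta) * sbm (i%:R / n%:R) x y.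

Inductive mut_op := SBM of (nat -> R) | HeavyTailed of R.

Definition mutate (m : mut_op) n : bits n -> bits n -> R :=
  match m with SBM p => @sbm n (p n) | HeavyTailed beta => @heavy n beta end.

Variable f : forall n, bits n -> nat.

Definition pplus m n (x : bits n) : R := \sum_(y | (f x < f y)%N) mutate m x y.
Definition pminus m n (x : bits n) : R := \sum_(y | (f y < f x)%N) mutate m x y.

Definition pmin m (d : nat -> nat) n : R :=
  \big[Num.min/1]_(x : bits n | (f x < d n)%N) pplus m x.
Definition pmax m (d : nat -> nat) n : R :=
  \big[Num.max/0]_(x : bits n | (f x < d n)%N) pplus m x.

Definition logb (b z : R) : R := ln z / ln b.

Definition penalty (F s pm lam : R) : R :=
  s / (s + 1) * logb F (Num.max (F `^ (1 / s) / (pm * lam)) 1).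
Definition potential (F s pm : R) (fx : nat) (lam : R) : R :=
  fx%:R - penalty F s pm lam.

Definition update (F s : R) (improved : bool) (lam : R) : R :=
  if improved then Num.max 1 (lam / F) else F `^ (1 / s) * lam.

Definition round_nat (lam : R) : nat := `|Num.floor (lam + 1 / 2)|%N.

(** Gain g(X_{t+1}) - g(X_t) when parent x with size lam is replaced by y.
    If [unit] is true, every fitness improvement is counted as an increase by exactly 1. *)
Definition gain (unit : bool) (F s pm : R) n (x y : bits n) (lam : R) : R :=
  let imp := (f x < f y)%N in
  let fd := if unit && imp then 1 else (f y)%:R - (f x)%:R in
  fd - penalty F s pm (update F s imp lam) + penalty F s pm lam.

(** Expected gain E[g(X_{t+1}) - g(X_t) | X_t = (x, lam)] for one generation of the
    self-adjusting (1,lambda) EA: round(lam) i.i.d. offspring, a fittest one chosen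
    uniformly at random among the fittest. *)
Definition drift (unit : bool) (m : mut_op) (d : nat -> nat) (F s : R) n
    (x : bits n) (lam : R) : R :=
  let k := round_nat lam in
  let pm := pmin m d n in
  \sum_(ys : {ffun 'I_k -> bits n})
    (\prod_(i < k) mutate m x (ys i)) *
    (let A := [set i : 'I_k | [forall j, (f (ys j) <= f (ys i))%N]] in
     (#|A|%:R)^-1 * \sum_(i in A) gain unit F s pm x (ys i) lam).

End SelfAdjustingEA.

Definition valid_op (R : realType) (m : mut_op R) : Prop :=
  match m with
  | SBM p =>
      (forall n, 0 <= p n <= 1) /\
      (exists C : R, exists N, forall n, (N <= n)%N -> p n <= C / n%:R) /\
      (exists c : R, exists N, forall n, (N <= n)%N -> n%:R `^ (- c) <= p n)
  | HeavyTailed beta => 1 < beta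
  end.

(* Main.v *)
Require Import Defs.
From HB Require Import structures.
From mathcomp Require Import all_boot all_order all_algebra.
From mathcomp Require Import reals sequences exp.
From mathcomp Require Import ring lra zify.
Import Order.TTheory GRing.Theory Num.Theory.
Local Open Scope ring_scope.



Section Aux.
Variable R : realType.

Lemma sbm_prod n (p : R) (x y : bits n) :
  sbm p x y = \prod_(i < n) (if x i != y i then p else 1 - p).
Proof.
rewrite (bigID (fun i => x i != y i)) /=.
rewrite (eq_bigr (fun _ => p)); last by move=> i ->.
rewrite [X in _ * X](eq_bigr (fun _ => 1 - p)); last by move=> i /negbTE ->.
rewrite !prodr_const /sbm /hdist cardsE.
congr (_ * _ ^+ _).
have H := cardC [pred i : 'I_n | x i != y i]; rewrite card_ord in H.
apply: (@addnI #|[pred i : 'I_n | x i != y i]|).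
rewrite subnKC; last by have := max_card (mem [pred i : 'I_n | x i != y i]); rewrite card_ord.
rewrite -[in LHS]H; congr (_ + _); apply: eq_card => i; by rewrite !inE.
Qed.

Lemma sbm_sum n (p : R) (x : bits n) : \sum_(y : bits n) sbm p x y = 1.
Proof.
rewrite (eq_bigr (fun y : {ffun 'I_n -> bool} => \prod_(i < n) (if x i != y i then p else 1 - p))); last by move=> y _; rewrite sbm_prod.
rewrite -(bigA_distr_bigA (fun (i : 'I_n) (b : bool) => if x i != b then p else 1 - p)).
apply: big1 => i _; rewrite big_bool /=; case: (x i) => /=; ring.
Qed.

End Aux.



Section Pen.
Variable R : realType.
Variables (F s pm : R).
Hypothesis (HF : 1 < F) (Hs : 0 < s) (Hpm : 0 < pm).

Local Notation G := (F `^ (1 / s)).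

Lemma lnF_gt0 : 0 < ln F. Proof. exact: ln_gt0. Qed.

Lemma lnG : ln G = (1 / s) * ln F. Proof. by rewrite /G ln_powR. Qed.

Lemma G_gt1 : 1 < G.
Proof.
have HF1 := HF; have Hs1x := Hs; have Hpm1 := Hpm.
rewrite ltNge; apply/negP => H.
have := ln_le0 H; rewrite lnG => H2.
have : 0 < 1 / s * ln F by apply: mulr_gt0; [rewrite divr_gt0 | exact: lnF_gt0].
lra.
Qed.

Local Notation A l := (Num.max (G / (pm * l)) 1).

Lemma A_ge1 l : 1 <= A l. Proof. by rewrite le_max lexx orbT. Qed.

Lemma pen_A l : penalty F s pm l = s / (s + 1) * (ln (A l) / ln F).
Proof. by []. Qed.

Lemma pen_succ lam : 0 < lam ->
  penalty F s pm (Num.max 1 (lam / F)) <= penalty F s pm lam + s / (s + 1).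
Proof.
have HF1 := HF; have Hs1x := Hs; have Hpm1 := Hpm.
move=> Hl.
have HF0 : 0 < F by lra.
have HG0 : 0 < G by apply: (lt_trans ltr01); exact: G_gt1.
have Hl' : lam / F <= Num.max 1 (lam / F) by rewrite le_max lexx orbT.
have HlF : 0 < lam / F by rewrite divr_gt0.
have key : A (Num.max 1 (lam / F)) <= F * A lam.
  rewrite ge_max; apply/andP; split.
    have Hm0 : 0 < Num.max 1 (lam / F) by apply: (lt_le_trans HlF Hl').
    apply: (@le_trans _ _ (G / (pm * (lam / F)))).
      apply: ler_wpM2l; first exact: ltW.
      rewrite lef_pV2 ?posrE; last 2 first.
        - exact: mulr_gt0.
        - exact: mulr_gt0.
      by rewrite ler_pM2l.
    have -> : G / (pm * (lam / F)) = F * (G / (pm * lam)).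
      field; apply/and3P; split; apply/lt0r_neq0 => //; lra.
    rewrite ler_pM2l //; by rewrite le_max lexx.
  have h := A_ge1 lam.
  have : 1 * 1 <= F * Num.max (G / (pm * lam)) 1.
    apply: ler_pM => //; lra.
  by rewrite mul1r.
have hA1 := A_ge1 (Num.max 1 (lam / F)).
have hA2 := A_ge1 lam.
have Hln : ln (A (Num.max 1 (lam / F))) <= ln F + ln (A lam).
  rewrite -lnM ?posrE; [|lra|lra].
  by rewrite ler_ln // posrE; [lra|apply: mulr_gt0; lra].
rewrite !pen_A.
have lF := lnF_gt0.
have Hs1 : 0 <= s / (s + 1) by apply: divr_ge0; lra.
have H : ln (A (Num.max 1 (lam / F))) / ln F <= ln (A lam) / ln F + 1.
  rewrite ler_pdivrMr // mulrDl divfK; [lra | exact: lt0r_neq0].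
apply: le_trans (ler_wpM2l Hs1 H) _; by rewrite mulrDr mulr1.
Qed.

Lemma pen_fail_le lam : 0 < lam ->
  penalty F s pm (F `^ (1 / s) * lam) <= penalty F s pm lam.
Proof.
have HF1 := HF; have Hs1x := Hs; have Hpm1 := Hpm.
move=> Hl.
have HG := G_gt1.
have lF := lnF_gt0.
have Hs1 : 0 <= s / (s + 1) by apply: divr_ge0; lra.
rewrite !pen_A ler_wpM2l // ler_pM2r ?invr_gt0 //.
have h1 := A_ge1 (G * lam); have h2 := A_ge1 lam.
rewrite ler_ln ?posrE; [|lra|lra].
rewrite ge_max; apply/andP; split; last exact: A_ge1.
rewrite le_max; apply/orP; left.
have G0 : G != 0 by apply: lt0r_neq0; lra.
have P0 : pm != 0 by apply: lt0r_neq0.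
have L0 : lam != 0 by apply: lt0r_neq0.
have -> : G / (pm * (G * lam)) = 1 / (pm * lam) by field; rewrite G0 P0 L0.
rewrite ler_pM2r ?invr_gt0 ?mulr_gt0 //; lra.
Qed.

Lemma pen_fail_small lam : 0 < lam -> pm * lam <= 1 ->
  penalty F s pm lam - penalty F s pm (F `^ (1 / s) * lam) = 1 / (s + 1).
Proof.
have HF1 := HF; have Hs1x := Hs; have Hpm1 := Hpm.
move=> Hl Hpl.
have HG := G_gt1.
have lF := lnF_gt0.
have Hpl0 : 0 < pm * lam by rewrite mulr_gt0.
have e1 : 1 <= 1 / (pm * lam) by rewrite ler_pdivlMr // mul1r.
have G0 : G != 0 by apply: lt0r_neq0; lra.
have P0 : pm != 0 by apply: lt0r_neq0.
have L0 : lam != 0 by apply: lt0r_neq0.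
have e2 : A (G * lam) = 1 / (pm * lam).
  have -> : G / (pm * (G * lam)) = 1 / (pm * lam) by field; rewrite G0 P0 L0.
  by rewrite max_l.
have e3 : A lam = G * (1 / (pm * lam)).
  rewrite max_l; first by rewrite mulrA mulr1.
  apply: (le_trans e1); rewrite ler_pM2r ?invr_gt0 //; lra.
have e1' : 0 < 1 / (pm * lam) by lra.
rewrite !pen_A e2 e3 lnM ?posrE; [|lra|lra].
have LF0 : ln F != 0 by apply: lt0r_neq0.
have S0 : s != 0 by apply: lt0r_neq0.
have S1 : s + 1 != 0 by apply: lt0r_neq0; lra.
rewrite lnG; field; by rewrite LF0 S0 S1.
Qed.

End Pen.



Section Exp.
Variable R : realFieldType.
Variable T : finType.

Lemma prod_const_ord k (c : R) : \prod_(i < k) c = c ^+ k.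
Proof. by rewrite -[in RHS](card_ord k) -prodr_const. Qed.

Lemma prod_ind k (b : 'I_k -> bool) :
  \prod_(i < k) ((b i)%:R : R) = ([forall i, b i])%:R.
Proof.
case: (boolP [forall i, b i]) => H.
  by apply: big1 => i _; rewrite (forallP H).
move/forallPn: H => [j /negbTE Hj]; by rewrite (bigD1 j) //= Hj mul0r.
Qed.

Lemma expect_all (w : T -> R) k (P : pred T) :
  \sum_(ys : {ffun 'I_k -> T}) (\prod_(i < k) w (ys i)) * ([forall j, P (ys j)])%:R
  = (\sum_(y | P y) w y) ^+ k.
Proof.
have E : \sum_(y | P y) w y = \sum_y w y * (P y)%:R.
  by rewrite big_mkcond; apply: eq_bigr => y _; case: (P y); rewrite ?mulr1 ?mulr0.
rewrite E -prod_const_ord.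
rewrite (bigA_distr_bigA (fun (i : 'I_k) (y : T) => w y * (P y)%:R)).
apply: eq_bigr => ys _; by rewrite big_split /= prod_ind.
Qed.

Lemma inner_ge k (fv : T -> nat) (fx : nat) (g : T -> R) (a b c : R)
    (ys : {ffun 'I_k -> T}) :
  (0 < k)%N -> 0 <= b -> 0 <= c ->
  (forall y, (fx < fv y)%N -> a <= g y) ->
  (forall y, fv y = fx -> a - b <= g y) ->
  (forall y, (fv y < fx)%N -> a - b - c <= g y) ->
  a - b * ([forall j, (fv (ys j) <= fx)%N])%:R - c * ([forall j, (fv (ys j) < fx)%N])%:R
   <= (#|[set i : 'I_k | [forall j, (fv (ys j) <= fv (ys i))%N]]|%:R)^-1 *
      \sum_(i in [set i : 'I_k | [forall j, (fv (ys j) <= fv (ys i))%N]]) g (ys i).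
Proof.
move=> Hk Hb Hc G1 G2 G3.
set A := [set i : 'I_k | _].
set h := a - _ - _.
have Hh : forall i, i \in A -> h <= g (ys i).
  move=> i; rewrite inE => /forallP Hi.
  rewrite /h; case: (ltngtP fx (fv (ys i))) => H.
  - have -> : [forall j, (fv (ys j) <= fx)%N] = false.
      by apply/negbTE/forallPn; exists i; rewrite -ltnNge.
    have -> : [forall j, (fv (ys j) < fx)%N] = false.
      apply/negbTE/forallPn; exists i; rewrite -leqNgt; exact: ltnW.
    rewrite !mulr0 !subr0; exact: G1.
  - have -> : [forall j, (fv (ys j) <= fx)%N] = true.
      apply/forallP => j; apply: leq_trans (Hi j) _; exact: ltnW.
    have -> : [forall j, (fv (ys j) < fx)%N] = true.
      apply/forallP => j; exact: leq_ltn_trans (Hi j) H.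
    rewrite !mulr1; exact: G3.
  - have -> : [forall j, (fv (ys j) <= fx)%N] = true.
      apply/forallP => j; by rewrite H.
    have -> : [forall j, (fv (ys j) < fx)%N] = false.
      by apply/negbTE/forallPn; exists i; rewrite H ltnn.
    rewrite mulr1 mulr0 subr0; exact: G2.
have [i _ Hi] := @arg_maxnP _ (Ordinal Hk) xpredT (fun i => fv (ys i)) isT.
have iA : i \in A by rewrite inE; apply/forallP => j; exact: Hi.
have cA : (0 < #|A|)%N by apply/card_gt0P; exists i.
have : \sum_(i in A) h <= \sum_(i in A) g (ys i) by apply: ler_sum.
rewrite sumr_const => H.
have cA' : (0 : R) < #|A|%:R by rewrite ltr0n.
rewrite -(ler_pM2l cA') mulrA mulfV ?mul1r; last exact: lt0r_neq0.
by rewrite -mulr_natl in H.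
Qed.

End Exp.



Section Mut.
Variable R : realType.

Lemma sbm_gt0 n (p : R) (x y : bits n) : 0 < p < 1 -> 0 < sbm p x y.
Proof.
move=> /andP[h1 h2]; rewrite /sbm mulr_gt0 // exprn_gt0 //; lra.
Qed.

Lemma sbm_ge0 n (p : R) (x y : bits n) : 0 <= p <= 1 -> 0 <= sbm p x y.
Proof.
move=> /andP[h1 h2]; rewrite /sbm mulr_ge0 // exprn_ge0 //; lra.
Qed.

Lemma half_ge1 n : (2 <= n)%N -> (1 < n./2.+1)%N.
Proof. by case: n => [|[|n']] //= _. Qed.

Lemma half_le n : (n./2 <= n)%N.
Proof. rewrite leq_half_double -addnn; lia. Qed.

Lemma ht_norm_gt0 n (beta : R) : (2 <= n)%N -> 0 < ht_norm n beta.
Proof.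
move=> Hn; rewrite /ht_norm big_ltn ?half_ge1 // mulr1n powR1.
have : 0 <= \sum_(2 <= j < n./2.+1) (j%:R : R) `^ (- beta).
  by apply: sumr_ge0 => i _; exact: powR_ge0.
lra.
Qed.

Lemma heavy_sum n (beta : R) (x : bits n) : (2 <= n)%N ->
  \sum_(y : bits n) heavy beta x y = 1.
Proof.
move=> Hn; rewrite /heavy exchange_big /=.
rewrite (eq_bigr (fun i => (i%:R : R) `^ (- beta) / ht_norm n beta)); last first.
  by move=> i _; rewrite -mulr_sumr sbm_sum mulr1.
rewrite -mulr_suml divff //; exact/lt0r_neq0/ht_norm_gt0.
Qed.

Lemma heavy_gt0 n (beta : R) (x y : bits n) : (2 <= n)%N -> 0 < heavy beta x y.
Proof.
move=> Hn; have Hz := ht_norm_gt0 n beta Hn.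
have Hn0 : (0 : R) < n%:R by rewrite ltr0n; lia.
rewrite /heavy big_ltn ?half_ge1 //.
have H1 : 0 < (1%:R : R) `^ (- beta) / ht_norm n beta * sbm (1%:R / n%:R) x y.
  rewrite mulr_gt0 // ?divr_gt0 ?powR_gt0 ?ltr01 //.
  apply: sbm_gt0; rewrite divr_gt0 ?ltr01 //= ltr_pdivrMr // mul1r ltr1n; lia.
have H2 : 0 <= \sum_(2 <= i < n./2.+1) (i%:R : R) `^ (- beta) / ht_norm n beta * sbm (i%:R / n%:R) x y.
  rewrite big_nat_cond; apply: sumr_ge0 => i /andP[/andP[Hi1 Hi2] _].
  rewrite mulr_ge0 ?divr_ge0 ?powR_ge0 //; first exact: ltW.
  apply: sbm_ge0; rewrite divr_ge0 ?ler0n //= ler_pdivrMr // mul1r ler_nat.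
  have := half_le n; lia.
lra.
Qed.

Lemma mut_good (m : mut_op R) : valid_op m ->
  exists N, forall n, (N <= n)%N -> forall x : bits n,
    (forall y, 0 < mutate m x y) /\ \sum_(y : bits n) mutate m x y = 1.
Proof.
case: m => [p|beta] /=.
  move=> [H01 [[C [N1 HC]] [c [N2 Hc]]]].
  exists (maxn (maxn N1 N2) (maxn 1 (Num.Def.archi_bound `|C|))) => n Hn x.
  have hN1 : (N1 <= n)%N by lia.
  have hN2 : (N2 <= n)%N by lia.
  have hn1 : (1 <= n)%N by lia.
  have hb : (Num.Def.archi_bound `|C| <= n)%N by lia.
  have Hn0 : (0 : R) < n%:R by rewrite ltr0n.
  have HCn : C < n%:R.
    apply: (le_lt_trans (ler_norm C)); apply: (lt_le_trans (archi_boundP (normr_ge0 C))).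
    by rewrite ler_nat.
  have hp1 : p n < 1.
    apply: (le_lt_trans (HC n hN1)); by rewrite ltr_pdivrMr // mul1r.
  have hp0 : 0 < p n.
    apply: (lt_le_trans _ (Hc n hN2)); exact: powR_gt0.
  split; last exact: sbm_sum.
  move=> y; apply: sbm_gt0; by rewrite hp0 hp1.
move=> _; exists 2%N => n Hn x; split.
  move=> y; exact: heavy_gt0.
exact: heavy_sum.
Qed.

End Mut.



Theorem lemma3p6 (R : realType) (F s : R) (m : mut_op R)
    (f : forall n, bits n -> nat) (d : nat -> nat) (gamma : R) :
  1 < F -> 0 < s -> valid_op m ->
  (* f_n takes values in {0,..,d_n}, with global optima at value d_n *)
  (forall n (x : bits n), (f n x <= d n)%N) ->
  (forall n, exists x : bits n, f n x = d n) ->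
  (* d + 1 = n^{o(log n)} *)
  (forall eps : R, 0 < eps -> exists N, forall n, (N <= n)%N ->
      ln (d n).+1%:R <= eps * (ln n%:R) ^+ 2) ->
  (* f is everywhere hard: p_max = O(n^{-eps}) for a constant 0 < eps < 1 *)
  (exists eps : R, 0 < eps < 1 /\ exists C : R, exists N, forall n, (N <= n)%N ->
      pmax f m d n <= C * n%:R `^ (- eps)) ->
  (* gamma > 1 constant with p_x^- <= 1/gamma for all non-optimal x *)
  1 < gamma ->
  (exists N, forall n, (N <= n)%N -> forall x : bits n, (f n x < d n)%N ->
      pminus f m x <= gamma^-1) ->
  exists N, forall n, (N <= n)%N ->
    let lambda1 := 4 * Num.max (logb gamma (2 * (d n)%:R * (s + 1)))
                               (logb gamma (n%:R * ln n%:R)) in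
    forall (x : bits n) (lam : R), (f n x < d n)%N -> lambda1 <= lam ->
    forall unit : bool,
      1 / (2 * (s + 1)) <= drift f unit m d F s x lam.
Proof.
move=> HF Hs Hm Hfd Hopt _ _ Hg [Ng Hpm].
have [Nm Hmut] := @mut_good R m Hm.
set M : R := Num.max 1000 (gamma ^+ 2).
have HM0 : 0 <= M by rewrite le_max ler0n.
exists (maxn (maxn Ng Nm) (maxn (Num.Def.archi_bound (expR (1 : R))) (Num.Def.archi_bound M))).
move=> n Hn lambda1 x lam Hx Hlam unit.
have hNg : (Ng <= n)%N by lia.
have hNm : (Nm <= n)%N by lia.
have Hn1 : expR (1 : R) < n%:R.
  apply: (lt_le_trans (archi_boundP (ltW (expR_gt0 (1 : R))))); rewrite ler_nat; lia.
have HnM : M < n%:R.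
  apply: (lt_le_trans (archi_boundP HM0)); rewrite ler_nat; lia.
have He0 := expR_gt0 (1 : R).
have Hn0 : (0 : R) < n%:R by clear -Hn1 He0; lra.
have Hln1 : 1 <= ln (n%:R : R).
  rewrite -[X in X <= _](expRK 1) ler_ln ?posrE //; exact: ltW.
set nl := n%:R * ln (n%:R : R).
have Hnl : M <= nl.
  rewrite /nl; have h : n%:R * 1 <= n%:R * ln (n%:R : R) by rewrite ler_pM2l.
  clear -h HnM; lra.
have Hlg : 0 < ln gamma by apply: ln_gt0.
have Hd1 : (1 : R) <= (d n)%:R by rewrite ler1n (leq_ltn_trans (leq0n _) Hx).
have Hs0 : 0 < s + 1 by rewrite addr_gt0.
have HA1 : 1 <= 2 * (d n)%:R * (s + 1).
  have h : 1 * 1 <= (2 * (d n)%:R) * (s + 1).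
    apply: ler_pM => //; clear -Hd1 Hs; lra.
  by rewrite mul1r in h.
have HA0 : 0 < 2 * (d n)%:R * (s + 1) by clear -HA1; lra.
set a' := logb gamma (2 * (d n)%:R * (s + 1)).
set b' := logb gamma nl.
have Ha' : 0 <= a'.
  rewrite /a' /logb divr_ge0 ?ln_ge0 //; exact: ltW.
have Hg2 : gamma ^+ 2 <= nl by apply: le_trans Hnl; rewrite le_max lexx orbT.
have H1000 : 1000 <= nl by apply: le_trans Hnl; rewrite le_max lexx.
have Hgpos : 0 < gamma by clear -Hg; lra.
have Hnl0 : 0 < nl by clear -H1000; lra.
have Hb' : 2 <= b'.
  rewrite /b' /logb ler_pdivlMr //.
  have E : ln (gamma ^+ 2) = ln gamma *+ 2 by apply: lnXn.
  rewrite mulr2n in E.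
  have h : ln (gamma ^+ 2) <= ln nl by rewrite ler_ln ?posrE // exprn_gt0.
  clear -E h; lra.
have Hmax : a' <= Num.max a' b' /\ b' <= Num.max a' b'.
  by rewrite !le_max !lexx orbT.
have Hl4a : 4 * a' <= lam by move: Hlam; rewrite /lambda1; clear -Hmax; lra.
have Hl4b : 4 * b' <= lam by move: Hlam; rewrite /lambda1; clear -Hmax; lra.
set k := round_nat lam.
have Hk : lam - 1 / 2 <= k%:R.
  rewrite /k /round_nat.
  have Hfl0 : 0 <= Num.floor (lam + 1 / 2) by rewrite floor_ge0; clear -Hl4b Hb'; lra.
  rewrite natr_absz ger0_norm //.
  have := lt_succ_floor (lam + 1 / 2); rewrite intrD /=; clear; lra.
have Hk0 : (0 < k)%N by rewrite -(ltr0n R); clear -Hk Hl4b Hb'; lra.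
have Hk9 : 9 / 10 * lam <= k%:R by clear -Hk Hl4b Hb'; lra.
have Hk2 : a' + b' <= k%:R by clear -Hk Hl4b Hl4a Hb' Ha'; lra.
have Hgk0 : 0 < gamma ^+ k by apply: exprn_gt0.
have Hgk : 2 * (d n)%:R * (s + 1) * nl <= gamma ^+ k.
  rewrite -ler_ln ?posrE; [| by rewrite mulr_gt0 | done].
  rewrite lnXn // lnM ?posrE //.
  have Ea : ln (2 * (d n)%:R * (s + 1)) = a' * ln gamma.
    by rewrite /a' /logb divfK //; apply: lt0r_neq0.
  have Eb : ln nl = b' * ln gamma.
    by rewrite /b' /logb divfK //; apply: lt0r_neq0.
  rewrite Ea Eb -mulr_natr -mulrDl mulrC ler_wpM2l //; exact: ltW.
have Hq2 : (d n)%:R * (pminus f m x) ^+ k <= 1 / (2000 * (s + 1)).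
  have Hp2 := Hpm n hNg x Hx.
  have [Hpos Hsum] := Hmut n hNm x.
  have Hp0 : 0 <= pminus f m x by apply: sumr_ge0 => y _; exact: ltW.
  have h1 : (pminus f m x) ^+ k <= gamma^-1 ^+ k.
    by apply: lerXn2r; rewrite // nnegrE // invr_ge0; exact: ltW.
  rewrite exprVn in h1.
  have h2 : 2000 * (s + 1) * (d n)%:R <= gamma ^+ k.
    apply: le_trans Hgk.
    have h : 2 * (d n)%:R * (s + 1) * 1000 <= 2 * (d n)%:R * (s + 1) * nl.
      by rewrite ler_wpM2l //; exact: ltW.
    clear -h; lra.
  have h3 : (d n)%:R * (gamma ^+ k)^-1 <= 1 / (2000 * (s + 1)).
    rewrite ler_pdivlMr ?mulr_gt0 //.
    rewrite mulrAC ler_pdivrMr //; clear -h2; lra.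
  apply: le_trans h3; rewrite ler_wpM2l //; clear -Hd1; lra.
rewrite /drift.
rewrite -/k.
have [Hpos Hsum] := Hmut n hNm x.
have Hpp : forall x' : bits n, (f n x' < d n)%N -> 0 < pplus f m x'.
  move=> x' Hx'; have [o Ho] := Hopt n.
  have [Hp' _] := Hmut n hNm x'.
  rewrite /pplus (bigD1 o) /=; last by rewrite Ho.
  have : 0 <= \sum_(y | (f n x' < f n y)%N && (y != o)) mutate m x' y.
    by apply: sumr_ge0 => y _; exact: ltW.
  have := Hp' o; move=> h1 h2; clear -h1 h2; lra.
set pm := pmin f m d n.
have Hpm0 : 0 < pm.
  rewrite /pm /pmin; apply: (big_ind (fun v : R => 0 < v)) => //.
    by move=> u v hu hv; rewrite lt_min hu hv.
have Hpmx : pm <= pplus f m x by rewrite /pm /pmin; exact: (@bigmin_le_cond _ _ _ 1 x _ (fun y => pplus f m y) Hx).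
set q1 := \sum_(y | (f n y <= f n x)%N) mutate m x y.
have Hq1 : q1 = 1 - pplus f m x.
  rewrite -Hsum (bigID (fun y => (f n x < f n y)%N)) /= /pplus /q1.
  rewrite [X in _ = _ + X - _](eq_bigl (fun y => (f n y <= f n x)%N)); last first.
    by move=> y; rewrite -leqNgt.
  ring.
have Hq1ge : 0 <= q1 by apply: sumr_ge0 => y _; exact: ltW.
set a := 1 / (s + 1).
set b := if 1 < pm * lam then a else 0.
set c := ((d n)%:R : R).
have Ha0 : 0 < a by rewrite /a divr_gt0.
have Hb0 : 0 <= b by rewrite /b; case: ifP => _; [exact: ltW | exact: lexx].
have Hc0 : 0 <= c by rewrite /c ler0n.
have Hlam0 : 0 < lam by clear -Hl4b Hb'; lra.
have Hsucc := @pen_succ _ _ _ _ HF Hs Hpm0 _ Hlam0.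
have Hfle := @pen_fail_le _ _ _ _ HF Hs Hpm0 _ Hlam0.
have Hfsm := @pen_fail_small _ _ _ _ HF Hs Hpm0 _ Hlam0.
have Hpen_fail : a - b <= penalty F s pm lam - penalty F s pm (F `^ (1 / s) * lam).
  rewrite /b; case: ifP => Hc.
    by rewrite subrr subr_ge0.
  rewrite subr0 Hfsm //; rewrite leNgt Hc //.
have Hfx : ((f n x)%:R : R) <= c by rewrite /c ler_nat; exact: ltnW.
have Hss : a + s / (s + 1) = 1.
  rewrite /a; field; exact: lt0r_neq0.
have G1 : forall y, (f n x < f n y)%N -> a <= gain f unit F s pm x y lam.
  move=> y Hy; rewrite /gain /update Hy /= andbT.
  have Hfd1 : 1 <= (if unit then 1 else (f n y)%:R - (f n x)%:R :> R).
    case: unit => //; have h : ((f n x).+1%:R : R) <= (f n y)%:R by rewrite ler_nat.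
    rewrite -addn1 natrD in h; clear -h; lra.
  move: Hfd1 Hsucc Hss; clear; move: (if unit then _ else _) (penalty F s pm (Num.max 1 (lam / F))) (penalty F s pm lam) (s / (s + 1)) => u p1 p2 q; rewrite /a; move: (1 / (s+1)) => a0; clear; lra.
have G2 : forall y, f n y = f n x -> a - b <= gain f unit F s pm x y lam.
  move=> y Hy; rewrite /gain /update Hy ltnn /= andbF subrr.
  move: Hpen_fail; clear; lra.
have G3 : forall y, (f n y < f n x)%N -> a - b - c <= gain f unit F s pm x y lam.
  move=> y Hy; rewrite /gain /update.
  have -> : (f n x < f n y)%N = false by apply/negbTE; rewrite -leqNgt ltnW.
  rewrite andbF /=.
  have h : (0 : R) <= (f n y)%:R by rewrite ler0n.
  move: h Hfx Hpen_fail; clear; lra.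
set q2 := pminus f m x.
have Hlow : \sum_(ys : {ffun 'I_k -> bits n}) (\prod_(i < k) mutate m x (ys i)) *
    (a - b * ([forall j, (f n (ys j) <= f n x)%N])%:R - c * ([forall j, (f n (ys j) < f n x)%N])%:R)
  <= \sum_(ys : {ffun 'I_k -> bits n}) (\prod_(i < k) mutate m x (ys i)) *
     ((#|[set i : 'I_k | [forall j, (f n (ys j) <= f n (ys i))%N]]|%:R)^-1 *
      \sum_(i in [set i : 'I_k | [forall j, (f n (ys j) <= f n (ys i))%N]])
         gain f unit F s pm x (ys i) lam).
  apply: ler_sum => ys _; apply: ler_wpM2l.
    by apply: prodr_ge0 => i _; exact: ltW.
  exact: (@inner_ge R (bits n) k (f n) (f n x) (fun y => gain f unit F s pm x y lam) a b c ys Hk0 Hb0 Hc0 G1 G2 G3).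
have Hmu : \sum_(ys : {ffun 'I_k -> bits n}) \prod_(i < k) mutate m x (ys i) = 1.
  transitivity (\prod_(i < k) \sum_(y : bits n) mutate m x y).
    by rewrite (bigA_distr_bigA (fun (i : 'I_k) (y : bits n) => mutate m x y)).
  by rewrite Hsum prod_const_ord expr1n.
have Heq : \sum_(ys : {ffun 'I_k -> bits n}) (\prod_(i < k) mutate m x (ys i)) *
    (a - b * ([forall j, (f n (ys j) <= f n x)%N])%:R - c * ([forall j, (f n (ys j) < f n x)%N])%:R)
    = a - b * q1 ^+ k - c * q2 ^+ k.
  rewrite (eq_bigr (fun ys : {ffun 'I_k -> bits n} =>
     a * (\prod_(i < k) mutate m x (ys i))
     - b * ((\prod_(i < k) mutate m x (ys i)) * ([forall j, (f n (ys j) <= f n x)%N])%:R)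
     - c * ((\prod_(i < k) mutate m x (ys i)) * ([forall j, (f n (ys j) < f n x)%N])%:R))); last first.
    by move=> ys _; ring.
  rewrite !sumrB -!mulr_sumr Hmu mulr1.
  rewrite (@expect_all R (bits n) (fun y => mutate m x y) k (fun y => (f n y <= f n x)%N)).
  by rewrite (@expect_all R (bits n) (fun y => mutate m x y) k (fun y => (f n y < f n x)%N)).
apply: le_trans Hlow; rewrite Heq.
have Ha2 : 1 / (2 * (s + 1)) = a / 2 by rewrite /a; field; exact: lt0r_neq0.
have Hc2 : c * q2 ^+ k <= a / 2000.
  have -> : a / 2000 = 1 / (2000 * (s + 1)) by rewrite /a; field; exact: lt0r_neq0.
  exact: Hq2.
rewrite Ha2 /b; case: ifP => Hbig; last first.
  rewrite mul0r subr0; move: Hc2 Ha0; clear; lra.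
have Hq1k : q1 ^+ k <= 400 / 841.
  have Hpm1 : pm <= 1.
    have : 0 <= q1 by [].
    rewrite Hq1 => h; move: h Hpmx; clear; lra.
  have h1 : q1 ^+ k <= (1 - pm) ^+ k.
    apply: lerXn2r; rewrite ?nnegrE //; first by move: Hpm1; clear; lra.
    rewrite Hq1; move: Hpmx; clear; lra.
  apply: le_trans h1 _.
  have h2 : (1 - pm) ^+ k <= expR (- pm) ^+ k.
    apply: lerXn2r; rewrite ?nnegrE //; first by move: Hpm1; clear; lra.
      exact: ltW (expR_gt0 _).
    have := expR_ge1Dx (- pm); move=> h; move: h; clear; lra.
  apply: le_trans h2 _.
  rewrite -expRM_natl.
  have h3 : 9 / 10 <= k%:R * pm.
    have h4 : 9 / 10 * lam * pm <= k%:R * pm by rewrite ler_pM2r.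
    have h5 : 1 <= pm * lam by exact: ltW.
    move: h4 h5; rewrite (mulrC pm lam); clear; lra.
  have h6 : expR (k%:R * - pm) <= expR (- (9 / 10)) :> R.
    rewrite ler_expR; move: h3; clear; lra.
  apply: le_trans h6 _.
  rewrite expRN.
  have h7 : (841 / 400 : R) <= expR (9 / 10).
    have -> : (9 / 10 : R) = 9 / 20 + 9 / 20 by field.
    rewrite expRD.
    have h8 := expR_ge1Dx (9 / 20 : R).
    have h9 : (29 / 20) * (29 / 20) <= expR (9 / 20 : R) * expR (9 / 20 : R).
      apply: ler_pM => //; move: h8; clear; lra.
    move: h9; clear; lra.
  rewrite -div1r ler_pdivrMr ?expR_gt0 //.
  have h11 : (400 / 841) * (841 / 400) <= (400 / 841 : R) * expR (9 / 10).
    by rewrite ler_wpM2l // divr_ge0 ?ler0n.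
  move: h11; clear; lra.
have h10 : a * q1 ^+ k <= a * (400 / 841) by rewrite ler_wpM2l //; exact: ltW.
move: h10 Hc2 Ha0; clear; lra.
Qed.
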